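(* Let $G=\langle A\cup B\rangle$ be a stable and strongly orbitwise-abelian CS group with periodic rooted group $A$ such that either (i) $A$ has finite exponent, or (ii) the directed group $B$ has finite support. Assume that $B$ is abelian and periodic. If the atomic dynamical system $\Lambda_b$ on $\mathcal P(A)$ is eventually trivial for every $b\in B$, then $G$ is periodic.
   Context: Let $X$ be a nonempty set (possibly infinite) with distinguished letter $0$, $\dot X=X\setminus\{0\}$. $X^*$ is the free monoid on $X$ viewed as a rooted tree; $\mathrm{Aut}(X^* )$ is the group of root-fixing tree automorphisms acting on the right ($gh$ = first $g$ then $h$); sections $g|_u$ are defined by $(u\star v).g=u.g\star v.(g|_u)$; elements of $\mathrm{Sym}(X)$ are identified with rooted automorphisms $(x\star v).\rho=x.\rho\star v$; $\mathrm{St}(1)$ is the first layer stabiliser. A constant spinal (CS) group is $G=\langle A\cup B\rangle$ with $A\le\mathrm{Sym}(X)$ transitive (rooted group) and $B\le\mathrm{St}(1)$ (directed group) such that $b|_0=b$ for all $b\in B$ and the elements $b|_x$ ($b\in B$, $x\in\dot X$) lie in $A$ and generate $A$. $B$ has finite support if each $b\in B$ has $b|_x=\mathrm{id}$ for all but finitely many $x$. A group is periodic if every element has finite order. Notation: $\mathrm{st}_A(0)$ is the stabiliser of $0$; $\mathrm{orb}_c(0)$ the $\langle c\rangle$-orbit of $0$ and $\ell_c(0)$ its length. For $x\in X$ let $\mathrm{mp}_A(0,x)=\{c\in A: 0.c=x\}$ and fix $e_{0\mapsto x}\in\mathrm{mp}_A(0,x)$ with $e_{0\mapsto0}=1_A$.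 For $a\in A$, $x\in X$: $\mathfrak C(a,x)=\{cac^{-1}:c\in\mathrm{mp}_A(0,x)\}$ and $\mathfrak X(a,x)=\bigcup_{c\in\mathfrak C(a,x)}\mathrm{orb}_c(0)\setminus\{0\}$. For $b\in B$, $a\in A$ ($A$ periodic): $\lambda_b(a)=b|_{0.a}\,b|_{0.a^2}\cdots b|_{0.a^{\ell_a(0)-1}}$, $\lambda_b(a,x)=\lambda_b(e_{0\mapsto x}\,a\,e_{0\mapsto x}^{-1})$, and $\Lambda_b:\mathcal P(A)\to\mathcal P(A)$ is the atomic map $\Lambda_b(P)=\bigcup_{a\in P}\{\lambda_b(a,x):x\in X\}$. An atomic map $\Phi$ on $\mathcal P(A)$ is eventually trivial if for every $a\in A$ there is $n$ with $\Phi^m(\{a\})\subseteq\{1_A\}$ for all $m>n$. $G$ is stable if $\lambda_b(c')=\lambda_b(c'')$ for all $b\in B$, $a\in A$, $x\in X$ and $c',c''\in\mathfrak C(a,x)$. $G$ is strongly orbitwise-abelian if $\langle b|_y: y\in\mathfrak X(a,x),\ b\in B\rangle$ is abelian for all $a\in A$, $x\in X$. *)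

(* Defs.v *)
From mathcomp Require Import all_boot.
From Stdlib Require Import ClassicalEpsilon.
Set Implicit Arguments. Unset Strict Implicit. Unset Printing Implicit Defensive.

Section CS.
Variable X : Type.
Variable x0 : X.

(* Words of X^* are seq X.  Tree automorphisms act on the right: the
   product g h (first g, then h) is the function h \o g. *)
Definition is_tree_aut (g : seq X -> seq X) : Prop :=
  bijective g /\ (forall w, size (g w) = size w) /\
  (forall u v, take (size u) (g (u ++ v)) = g u).

(* section g|_u : (u v).g = (u.g) (v.(g|_u)) *)
Definition sec (g : seq X -> seq X) (u : seq X) : seq X -> seq X :=
  fun v => drop (size u) (g (u ++ v)).

Definition rooted (r : X -> X) : seq X -> seq X :=
  fun w => match w with [::] => [::] | x :: v => r x :: v end.

Definition perm_of (h : seq X -> seq X) : X -> X := fun z => head z (h [:: z]).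

(* b|_y viewed as an element of Sym(X) *)
Definition secA (b : seq X -> seq X) (y : X) : X -> X := perm_of (sec b [:: y]).

Definition in_St1 (g : seq X -> seq X) : Prop := forall x, g [:: x] = [:: x].
End CS.

Inductive gen {T : Type} (S : (T -> T) -> Prop) : (T -> T) -> Prop :=
| gen_id : gen S id
| gen_mul g s : gen S g -> S s -> gen S (s \o g)
| gen_inv g s s' : gen S g -> S s -> cancel s s' -> cancel s' s -> gen S (s' \o g).

Definition is_subgroup {T : Type} (H : (T -> T) -> Prop) : Prop :=
  H id /\ (forall g h, H g -> H h -> H (h \o g)) /\
  (forall g, H g -> exists g', H g' /\ cancel g g' /\ cancel g' g).

Definition periodic {T : Type} (H : (T -> T) -> Prop) : Prop :=
  forall g, H g -> exists n, 0 < n /\ forall t, iter n g t = t.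

Definition abelian_set {T : Type} (H : (T -> T) -> Prop) : Prop :=
  forall g h, H g -> H h -> forall t, g (h t) = h (g t).

Definition finite_exponent {T : Type} (H : (T -> T) -> Prop) : Prop :=
  exists n, 0 < n /\ forall g, H g -> forall t, iter n g t = t.

Section CSdefs.
Variable X : Type.
Variable x0 : X.

Definition CS_data (A : (X -> X) -> Prop) (B : (seq X -> seq X) -> Prop) : Prop :=
  is_subgroup A /\
  (forall a, A a -> exists a', cancel a a' /\ cancel a' a) /\
  (forall x y, exists a, A a /\ a x = y) /\
  is_subgroup B /\
  (forall b, B b -> is_tree_aut b /\ in_St1 b) /\
  (forall b, B b -> forall w, sec b [:: x0] w = b w) /\
  (forall b x, B b -> x <> x0 ->
     A (secA b x) /\ forall w, sec b [:: x] w = rooted (secA b x) w) /\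
  (forall a, A a <->
     gen (fun a' => exists b x, B b /\ x <> x0 /\ a' = secA b x) a).

Definition CS_group (A : (X -> X) -> Prop) (B : (seq X -> seq X) -> Prop)
  : (seq X -> seq X) -> Prop :=
  gen (fun g => (exists a, A a /\ g = rooted a) \/ B g).

Definition finite_support (B : (seq X -> seq X) -> Prop) : Prop :=
  forall b, B b -> exists s : seq X,
    forall x, ~ List.In x s -> forall w, sec b [:: x] w = w.

Definition ell (c : X -> X) : nat :=
  epsilon (inhabits 0%N) (fun n => 0 < n /\ iter n c x0 = x0 /\
     forall m, 0 < m -> iter m c x0 = x0 -> n <= m).

Definition finv (f : X -> X) : X -> X :=
  fun y => epsilon (inhabits y) (fun z => f z = y).

(* c a c^{-1} (right action: first c, then a, then c^{-1}) *)
Definition conjA (c a : X -> X) : X -> X := fun z => finv c (a (c z)).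

(* lambda_b(a) = b|_{0.a} b|_{0.a^2} ... b|_{0.a^{l-1}} *)
Definition lam (b : seq X -> seq X) (a : X -> X) : X -> X :=
  fun z => foldl (fun z k => secA b (iter k a x0) z) z (iota 1 (ell a).-1).

(* lambda_b(a, x), with e x = e_{0 -> x} *)
Definition lamx (e : X -> X -> X) (b : seq X -> seq X) (a : X -> X) (x : X)
  : X -> X := lam b (conjA (e x) a).

Definition Lam (e : X -> X -> X) (b : seq X -> seq X)
  (P : (X -> X) -> Prop) : (X -> X) -> Prop :=
  fun f => exists a x, P a /\ f = lamx e b a x.

Definition eventually_trivial (A : (X -> X) -> Prop)
  (Phi : ((X -> X) -> Prop) -> ((X -> X) -> Prop)) : Prop :=
  forall a, A a -> exists n, forall m, n < m ->
    forall f, iter m Phi (fun f' => f' = a) f -> forall z, f z = z.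

Definition Cset (A : (X -> X) -> Prop) (a : X -> X) (x : X) : (X -> X) -> Prop :=
  fun f => exists c, A c /\ c x0 = x /\ f = conjA c a.

Definition Xset (A : (X -> X) -> Prop) (a : X -> X) (x : X) : X -> Prop :=
  fun y => exists c, Cset A a x c /\ (exists k, y = iter k c x0) /\ y <> x0.

Definition stable (A : (X -> X) -> Prop) (B : (seq X -> seq X) -> Prop) : Prop :=
  forall b a x c' c'', B b -> A a -> Cset A a x c' -> Cset A a x c'' ->
    forall z, lam b c' z = lam b c'' z.

Definition strongly_orbitwise_abelian (A : (X -> X) -> Prop)
  (B : (seq X -> seq X) -> Prop) : Prop :=
  forall a x, A a ->
    abelian_set (gen (fun f => exists b y, B b /\ Xset A a x y /\ f = secA b y)).

Definition e_choice (A : (X -> X) -> Prop) (e : X -> X -> X) : Prop :=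
  (forall x, A (e x) /\ e x x0 = x) /\ (forall z, e x0 z = z).
End CSdefs.

(* Main.v *)
Require Import Defs.
From HB Require Import structures.
From mathcomp Require Import all_boot.
From Stdlib Require Import ClassicalEpsilon FunctionalExtensionality Classical.
Set Implicit Arguments. Unset Strict Implicit. Unset Printing Implicit Defensive.

Section Prod.
Variable T : Type.
Fixpoint prodf (n : nat) (F : nat -> T -> T) : T -> T :=
  match n with 0 => id | n'.+1 => fun t => F n' (prodf n' F t) end.
Definition comm (f g : T -> T) := forall t, f (g t) = g (f t).

Lemma prodf_recl n F t : prodf n.+1 F t = prodf n (fun i => F i.+1) (F 0 t).
Proof. by elim: n t => //= n IH t; rewrite IH. Qed.

Lemma eq_prodf n F G : (forall i, i < n -> forall t, F i t = G i t) -> forall t, prodf n F t = prodf n G t.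
Proof.
elim: n => //= n IH H t; rewrite H // IH // => i Hi; apply: H; exact: ltnW.
Qed.

Lemma prodf_id n F : (forall i, i < n -> forall t, F i t = t) -> forall t, prodf n F t = t.
Proof. elim: n => //= n IH H t; rewrite H // IH // => i Hi; apply: H; exact: ltnW. Qed.

Lemma prodf_comm g n F : (forall i, i < n -> comm g (F i)) -> comm g (prodf n F).
Proof.
elim: n => //= n IH H t; rewrite H // -IH // => i Hi; apply: H; exact: ltnW.
Qed.

Lemma comm_sym f g : comm f g -> comm g f. Proof. by move=> H t; rewrite H. Qed.

Lemma prodf_mul n F G : (forall i j, i < n -> j < n -> comm (F i) (G j)) ->
  forall t, prodf n (fun i t => F i (G i t)) t = prodf n F (prodf n G t).
Proof.
elim: n => //= n IH H t; rewrite IH; last by move=> i j Hi Hj; apply: H; exact: ltnW.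
congr (F n _); apply: prodf_comm => i Hi; apply: comm_sym; apply: H => //; exact: ltnW.
Qed.

Lemma prodf_exch n m (F : nat -> nat -> T -> T) :
  (forall i j i' j', comm (F i j) (F i' j')) ->
  forall t, prodf n (fun j => prodf m (fun i => F i j)) t = prodf m (fun i => prodf n (fun j => F i j)) t.
Proof.
move=> H; elim: m => [|m IH] t /=; first by rewrite prodf_id.
transitivity (prodf n (fun j => F m j) (prodf n (fun j => prodf m (fun i => F i j)) t)).
  apply: (@prodf_mul n (fun j => F m j) (fun j => prodf m (fun i => F i j))).
  move=> i j _ _; apply: prodf_comm => k _; exact: H.
by rewrite IH.
Qed.

Lemma prodf_rot1 n (H : nat -> T -> T) : (forall i j, comm (H i) (H j)) ->
  (forall t, H n t = H 0 t) ->
  forall t, prodf n (fun j => H j.+1) t = prodf n H t.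
Proof.
move=> Hc Hn t; case: n Hn => // n Hn.
rewrite [RHS]prodf_recl /= Hn; apply: prodf_comm => i _; exact: Hc.
Qed.

Lemma prodf_rot n d (H : nat -> T -> T) : (forall i j, comm (H i) (H j)) ->
  (forall j t, H (j + n) t = H j t) ->
  forall t, prodf n (fun j => H (j + d)) t = prodf n H t.
Proof.
move=> Hc Hp; elim: d => [|d IH] t.
  by apply: eq_prodf => i _ t'; rewrite addn0.
rewrite -IH; rewrite -(prodf_rot1 (H := fun j => H (j + d))).
- by apply: eq_prodf => i _ t'; rewrite addSnnS.
- by move=> i j; apply: Hc.
- by move=> t'; rewrite add0n addnC Hp.
Qed.

Lemma prodf_foldl n F t : prodf n F t = foldl (fun z k => F k z) t (iota 0 n).
Proof. elim: n t => // n IH t; have -> : iota 0 n.+1 = iota 0 n ++ [:: n] by rewrite -addn1 iotaD. by rewrite foldl_cat /= -IH. Qed.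

Lemma prodf_single n (P : nat -> bool) (b : T -> T) :
  (forall j j', j < n -> j' < n -> P j -> P j' -> j = j') -> (exists2 j, j < n & P j) ->
  forall t, prodf n (fun j => if P j then b else id) t = b t.
Proof.
elim: n => [|n IH] Hu [j Hj Pj] t //=.
case Pn: (P n).
  rewrite prodf_id // => i Hi t'; case Pi: (P i) => //.
  by have := Hu i n (ltnW Hi) (ltnSn n) Pi Pn => E; move: Hi; rewrite E ltnn.
rewrite IH //.
  by move=> a b' Ha Hb; apply: Hu; exact: ltnW.
exists j => //; move: Hj; rewrite ltnS leq_eqVlt => /orP [/eqP E|//].
by move: Pn; rewrite -E Pj.
Qed.
End Prod.

Section Words.
Variable X : eqType.
Variable x0 : X.
Variables (A : (X -> X) -> Prop) (B : (seq X -> seq X) -> Prop).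
Hypothesis A_id : A id.
Hypothesis A_comp : forall f g, A f -> A g -> A (g \o f).
Hypothesis A_inv : forall f, A f -> exists f', A f' /\ cancel f f' /\ cancel f' f.
Hypothesis B_id : B id.
Hypothesis B_comp : forall f g, B f -> B g -> B (g \o f).
Hypothesis B_inv : forall f, B f -> exists f', B f' /\ cancel f f' /\ cancel f' f.
Hypothesis B_cons : forall b x v, B b -> b (x :: v) = x :: sec b [:: x] v.
Hypothesis B_nil : forall b, B b -> b [::] = [::].
Hypothesis B_sec0 : forall b v, B b -> sec b [:: x0] v = b v.
Hypothesis B_secA : forall b x, B b -> x <> x0 -> A (secA b x).
Hypothesis B_secx : forall b x v, B b -> x <> x0 -> sec b [:: x] v = rooted (secA b x) v.

Inductive letter := LA of (X -> X) | LB of (seq X -> seq X).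
Definition act (l : letter) : seq X -> seq X :=
  match l with LA a => rooted a | LB b => b end.
Definition pl (l : letter) : X -> X := match l with LA a => a | LB _ => id end.
Definition vl (l : letter) : Prop := match l with LA a => A a | LB b => B b end.
Fixpoint valid (w : seq letter) : Prop :=
  match w with [::] => True | l :: w' => vl l /\ valid w' end.
Fixpoint evalw (w : seq letter) : seq X -> seq X :=
  match w with [::] => id | l :: w' => fun t => evalw w' (act l t) end.
Fixpoint permw (w : seq letter) : X -> X :=
  match w with [::] => id | l :: w' => fun t => permw w' (pl l t) end.
Definition secl (l : letter) (z : X) : letter :=
  match l with LA _ => LA id | LB b => if z == x0 then LB b else LA (secA b z) end.
Fixpoint secw (w : seq letter) (x : X) : seq letter :=
  match w with [::] => [::] | l :: w' => secl l x :: secw w' (pl l x) end.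
Fixpoint secpow (w : seq letter) (n : nat) (x : X) : seq letter :=
  match n with 0 => [::] | n'.+1 => secw w x ++ secpow w n' (permw w x) end.
Definition isB (l : letter) : bool := match l with LA _ => false | LB _ => true end.
Definition bcount (w : seq letter) := count isB w.

Lemma evalw_cat u v t : evalw (u ++ v) t = evalw v (evalw u t).
Proof. by elim: u t => //= l u IH t. Qed.
Lemma permw_cat u v t : permw (u ++ v) t = permw v (permw u t).
Proof. by elim: u t => //= l u IH t. Qed.
Lemma valid_cat u v : valid (u ++ v) <-> valid u /\ valid v.
Proof. elim: u => //= [|l u IH]; first by tauto. rewrite IH; tauto. Qed.

Lemma act_cons l x v : vl l -> act l (x :: v) = pl l x :: act (secl l x) v.
Proof.
case: l => [a|b] /= H; first by case: v.
rewrite B_cons //; case: eqP => [->|nx]; first by rewrite B_sec0.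
by rewrite B_secx.
Qed.

Lemma evalw_cons w x v : valid w -> evalw w (x :: v) = permw w x :: evalw (secw w x) v.
Proof. by elim: w x v => //= l w IH x v [Hl Hw]; rewrite act_cons // IH. Qed.

Lemma valid_secl l x : vl l -> vl (secl l x).
Proof. case: l => [a|b] //= H; case: eqP => //= nx; exact: B_secA. Qed.
Lemma valid_secw w x : valid w -> valid (secw w x).
Proof. elim: w x => //= l w IH x [Hl Hw]; split; [exact: valid_secl|exact: IH]. Qed.
Lemma valid_secpow w n x : valid w -> valid (secpow w n x).
Proof.
move=> Hw; elim: n x => //= n IH x; apply/valid_cat; split; [exact: valid_secw|exact: IH].
Qed.

Lemma secpow_add w a b x :
  secpow w (a + b) x = secpow w a x ++ secpow w b (iter a (permw w) x).
Proof. by elim: a x => // a IH x; rewrite addSn /= IH catA -iterSr. Qed.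

Lemma iter_evalw w n x v : valid w ->
  iter n (evalw w) (x :: v) = iter n (permw w) x :: evalw (secpow w n x) v.
Proof.
move=> Hw; elim: n x v => // n IH x v.
by rewrite !iterSr evalw_cons // IH /= evalw_cat.
Qed.

Definition perN (u : seq letter) N := forall t, iter N (evalw u) t = t.
Definition perw (u : seq letter) := exists N, 0 < N /\ perN u N.

Lemma iter_conj (T : Type) (g h : T -> T) N s :
  iter N (fun t => g (h t)) (g s) = g (iter N (fun t => h (g t)) s).
Proof. by elim: N => //= N ->. Qed.

Lemma act_surj l t : vl l -> exists s, act l s = t.
Proof.
case: l => [a|b] /= H.
  have [a' [_ [_ K]]] := A_inv H; exists (rooted a' t); case: t => //= x v; by rewrite K.
have [b' [_ [_ K]]] := B_inv H; exists (b' t); exact: K.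
Qed.

Lemma evalw_surj u t : valid u -> exists s, evalw u s = t.
Proof.
elim: u t => /= [|l u IH] t; first by exists t.
move=> [Hl Hu]; have [s1 E1] := IH t Hu; have [s E] := act_surj s1 Hl.
by exists s; rewrite E.
Qed.

Lemma perN_rot u v N : valid u -> perN (u ++ v) N -> perN (v ++ u) N.
Proof.
move=> Hu H t; have [s <-] := evalw_surj t Hu.
have E : forall t, evalw (v ++ u) t = evalw u (evalw v t) by move=> t'; rewrite evalw_cat.
have E2 : forall t, evalw (u ++ v) t = evalw v (evalw u t) by move=> t'; rewrite evalw_cat.
have -> : iter N (evalw (v ++ u)) (evalw u s) = iter N (fun t => evalw u (evalw v t)) (evalw u s).
  by elim: N {H} => //= N ->; rewrite E.
rewrite iter_conj; congr (evalw u _); rewrite -[RHS](H s).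
by elim: N {H} => //= N ->; rewrite E2.
Qed.

Lemma perw_rot u v : valid u -> perw (u ++ v) -> perw (v ++ u).
Proof. by move=> Hu [N [HN H]]; exists N; split => //; exact: perN_rot. Qed.

Lemma iter_rooted (a : X -> X) n t : iter n (rooted a) t = rooted (iter n a) t.
Proof.
elim: n t => [|n IH] [|x v] //=; rewrite IH //.
Qed.

Lemma pureA u : valid u -> bcount u = 0 -> A (permw u) /\ forall t, evalw u t = rooted (permw u) t.
Proof.
elim: u => /= [|l u IH]; first by split => // -[].
case: l => [a|b] //= [Ha Hu] Hc; have [HA HE] := IH Hu Hc; split.
  exact: (A_comp Ha HA).
by move=> [|x v] /=; rewrite HE.
Qed.

Lemma iter_fixall (T : Type) (f : T -> T) n : (forall t, f t = t) -> forall t, iter n f t = t.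
Proof. by move=> H t; elim: n => //= n ->. Qed.

Lemma perN_mul u N q : perN u N -> perN u (q * N).
Proof. by move=> H t; rewrite iterM; apply: iter_fixall. Qed.

Lemma iter_iter_comm (T : Type) (f : T -> T) N q t :
  iter N (iter q f) t = iter q (iter N f) t.
Proof. by rewrite -!iterM mulnC. Qed.

Definition isminper (p : X -> X) (x : X) (l : nat) :=
  0 < l /\ iter l p x = x /\ forall n, 0 < n -> iter n p x = x -> l <= n.

Lemma exists_minper p x : (exists n, 0 < n /\ iter n p x = x) -> exists l, isminper p x l.
Proof.
move=> [n [Hn E]].
have ex : exists n, (0 < n) && (iter n p x == x) by exists n; rewrite Hn E eqxx.
case: (ex_minnP ex) => l /andP [Hl /eqP El] Hmin; exists l; split; [|split] => //.
by move=> k Hk Ek; apply: Hmin; rewrite Hk Ek eqxx.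
Qed.

Lemma iter_period (p : X -> X) (x : X) l q : iter l p x = x -> iter (q * l) p x = x.
Proof. by move=> H; rewrite iterM; apply: iter_fix. Qed.

Lemma minper_dvd p x l m : isminper p x l -> iter m p x = x -> l %| m.
Proof.
move=> [Hl [El Hmin]] Em.
have Er : iter (m %% l) p x = x.
  move: Em; rewrite {1}(divn_eq m l) addnC iterD iter_period //.
case: (posnP (m %% l)) => [H0|Hpos]; first by rewrite /dvdn H0.
have := Hmin _ Hpos Er; by rewrite leqNgt ltn_mod Hl.
Qed.

Lemma iter_injective (T : Type) (f : T -> T) n : injective f -> injective (iter n f).
Proof. by move=> Hf; elim: n => //= n IH a b /Hf /IH. Qed.

Lemma iter_comm1 (T : Type) (f : T -> T) n t : iter n f (f t) = f (iter n f t).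
Proof. by rewrite -iterSr. Qed.

Lemma minper_distinct p x l i j : injective p -> isminper p x l -> i < j -> j < l ->
  iter i p x <> iter j p x.
Proof.
move=> Hp [Hl [El Hmin]] Hij Hjl E.
have E2 : iter i p (iter (j - i) p x) = iter i p x.
  by rewrite -iterD subnKC ?(ltnW Hij) // E.
have := Hmin (j - i); rewrite subn_gt0 Hij => /(_ isT (iter_injective Hp E2)).
move=> H; have : j - i < l by apply: leq_ltn_trans (leq_subr _ _) Hjl.
by rewrite ltnNge H.
Qed.

Lemma minper_orbit p x l j : injective p -> isminper p x l -> isminper p (iter j p x) l.
Proof.
move=> Hp [Hl [El Hmin]]; split => //; split.
  by rewrite -iterD addnC iterD El.
move=> n Hn En; apply: Hmin => //; apply: (iter_injective (n:=j) Hp).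
by rewrite -iterD addnC iterD.
Qed.

Lemma perN_secpow_step w n x N : valid w -> 0 < n -> iter n (permw w) x = x ->
  perN (secpow w n x) N -> perN (secpow w n (permw w x)) N.
Proof.
move=> Hw; case: n => // n _ En H.
have E1 : secpow w n.+1 (permw w x) = secpow w n (permw w x) ++ secw w x.
  by rewrite -addn1 secpow_add /= -iterSr En cats0.
rewrite E1; apply: perN_rot => //; first exact: valid_secw.
Qed.

Lemma perN_secpow_orbit w n x N j : valid w -> 0 < n -> iter n (permw w) x = x ->
  perN (secpow w n x) N -> perN (secpow w n (iter j (permw w) x)) N.
Proof.
move=> Hw Hn En H; elim: j => //= j IH.
apply: perN_secpow_step => //.
by rewrite -iterD addnC iterD En.
Qed.

Lemma evalw_secpow_mul w l x q t : iter l (permw w) x = x ->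
  evalw (secpow w (q * l) x) t = iter q (evalw (secpow w l x)) t.
Proof.
move=> El; elim: q t => //= q IH t.
by rewrite mulSn secpow_add El evalw_cat IH -iterSr.
Qed.

Lemma perN_secpow_mul w l x q N : iter l (permw w) x = x ->
  perN (secpow w l x) N -> perN (secpow w (q * l) x) N.
Proof.
move=> El H t.
have -> : iter N (evalw (secpow w (q * l) x)) t = iter N (iter q (evalw (secpow w l x))) t.
  by elim: N {H} => //= N ->; rewrite evalw_secpow_mul.
by rewrite iter_iter_comm; apply: iter_fixall.
Qed.

Definition dl := LA id.
Definition pre (u : seq letter) (i : nat) : X -> X := permw (take i u).

Lemma A_permw u : valid u -> A (permw u).
Proof.
elim: u => //= l u IH [Hl Hu]; case: l Hl => [a|b] /= Hl.
  exact: (A_comp Hl (IH Hu)).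
exact: (A_comp A_id (IH Hu)).
Qed.

Lemma valid_take u i : valid u -> valid (take i u).
Proof. elim: u i => //= l u IH [|i] //= [Hl Hu]; split => //; exact: IH. Qed.

Lemma A_inj f : A f -> injective f.
Proof. by move=> /A_inv [f' [_ [K _]]]; exact: can_inj K. Qed.

Lemma pre_inj u i : valid u -> injective (pre u i).
Proof. by move=> Hu; apply: A_inj; apply: A_permw; apply: valid_take. Qed.

Lemma bcount_sum u : bcount u = \sum_(i < size u) isB (nth dl u i).
Proof.
elim: u => [|l u IH]; first by rewrite big_ord0.
by rewrite big_ord_recl /= -IH.
Qed.

Lemma bcount_secw u x :
  bcount (secw u x) = \sum_(i < size u) (isB (nth dl u i) && (pre u i x == x0)).
Proof.
elim: u x => [|l u IH] x; first by rewrite big_ord0.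
rewrite big_ord_recl /= -IH /bcount /=; congr (_ + _).
by case: l => //= b; case: eqP.
Qed.

Lemma bcount_secpow u n x :
  bcount (secpow u n x) = \sum_(j < n) bcount (secw u (iter j (permw u) x)).
Proof.
elim: n x => [|n IH] x; first by rewrite big_ord0.
rewrite big_ord_recl /= /bcount count_cat; have := IH (permw u x); rewrite /bcount => ->.
by congr (_ + _); apply: eq_bigr => j _; rewrite add0n -iterS iterSr.
Qed.

Lemma sum_le1 l (P : nat -> bool) :
  (forall j j', j < l -> j' < l -> P j -> P j' -> j = j') -> \sum_(j < l) P j <= 1.
Proof.
elim: l => [|l IH] H; first by rewrite big_ord0.
rewrite big_ord_recr /=; case Pl: (P l).
  rewrite big1 // => j _; case Pj: (P j) => //.
  by have := H j l (ltnW (ltn_ord j)) (ltnSn l) Pj Pl => E; move: (ltn_ord j); rewrite E ltnn.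
rewrite addn0; apply: IH => j j' Hj Hj'; apply: H; exact: ltnW.
Qed.

Lemma sum_pos_ex l (P : nat -> bool) : 0 < \sum_(j < l) P j -> exists2 j, j < l & P j.
Proof.
elim: l => [|l IH]; first by rewrite big_ord0.
rewrite big_ord_recr /=; case Pl: (P l); first by exists l.
rewrite addn0 => /IH [j Hj Pj]; exists j => //; exact: ltnW.
Qed.

Lemma sum_eq_le n (a b : nat -> nat) : (forall i, i < n -> a i <= b i) ->
  \sum_(i < n) a i = \sum_(i < n) b i -> forall i, i < n -> a i = b i.
Proof.
elim: n => [|n IH] Hle; first by [].
rewrite !big_ord_recr /= => E.
have H1 : \sum_(i < n) a i <= \sum_(i < n) b i by apply: leq_sum => i _; apply: Hle; exact: ltnW (ltn_ord i).
have H2 : a n <= b n by exact: Hle.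
have E1 : \sum_(i < n) a i = \sum_(i < n) b i.
  apply/eqP; rewrite eqn_leq H1 /=; rewrite -(leq_add2r (a n)) E; exact: leq_add.
have E2 : a n = b n by move: E; rewrite E1 => /addnI.
move=> i; rewrite ltnS leq_eqVlt => /orP [/eqP -> //|Hi].
apply: IH => // j Hj; apply: Hle; exact: ltnW.
Qed.

Section Count.
Variables (u : seq letter) (f : X) (l : nat).
Hypothesis Hu : valid u.
Hypothesis Hl : isminper (permw u) f l.

Lemma landing_unique i j j' : j < l -> j' < l ->
  pre u i (iter j (permw u) f) = x0 -> pre u i (iter j' (permw u) f) = x0 -> j = j'.
Proof.
move=> Hj Hj' E E'.
have Hp : injective (permw u) by apply: A_inj; exact: A_permw.
have Eq : iter j (permw u) f = iter j' (permw u) f by apply: (@pre_inj u i Hu); rewrite E E'.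
case: (ltngtP j j') => // Hlt.
  by case: (minper_distinct Hp Hl Hlt Hj').
by case: (minper_distinct Hp Hl Hlt Hj).
Qed.

Lemma bcount_secpow_exch : bcount (secpow u l f) =
  \sum_(i < size u) \sum_(j < l) (isB (nth dl u i) && (pre u i (iter j (permw u) f) == x0)).
Proof.
rewrite bcount_secpow (eq_bigr _ (fun j _ => bcount_secw _ _)) exchange_big //.
Qed.

Lemma inner_le i : \sum_(j < l) (isB (nth dl u i) && (pre u i (iter j (permw u) f) == x0))
   <= isB (nth dl u i).
Proof.
case HB: (isB (nth dl u i)) => /=; last by rewrite big1.
apply: (@sum_le1 l (fun j => pre u i (iter j (permw u) f) == x0)) => j j' Hj Hj' /eqP E /eqP E'; exact: landing_unique E E'.
Qed.

Lemma bcount_secpow_le : bcount (secpow u l f) <= bcount u.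
Proof.
rewrite bcount_secpow_exch bcount_sum; apply: leq_sum => i _; exact: inner_le.
Qed.

Lemma bcount_secpow_eq : bcount (secpow u l f) = bcount u ->
  forall i, i < size u -> isB (nth dl u i) -> exists2 j, j < l & pre u i (iter j (permw u) f) = x0.
Proof.
rewrite bcount_secpow_exch bcount_sum => E i Hi HB.
have := @sum_eq_le (size u)
  (fun i => \sum_(j < l) (isB (nth dl u i) && (pre u i (iter j (permw u) f) == x0)))
  (fun i => isB (nth dl u i)).
move=> /(_ (fun i _ => inner_le i) E i Hi) => Hs.
have : 0 < \sum_(j < l) (isB (nth dl u i) && (pre u i (iter j (permw u) f) == x0)) by rewrite Hs HB.
move=> /(@sum_pos_ex l (fun j => isB (nth dl u i) && (pre u i (iter j (permw u) f) == x0))) [j Hj /andP [_ /eqP Ej]].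
by exists j.
Qed.
End Count.

Hypothesis A_per : periodic A.

Lemma valid_nth u i : valid u -> vl (nth dl u i).
Proof. elim: u i => [|l u IH] [|i] /=; try by move=> _; exact: A_id. by case. by case=> _ Hu; exact: IH Hu. Qed.

Lemma In_mem (z : X) s : List.In z s -> z \in s.
Proof. elim: s => //= y s IH [->|H]; rewrite in_cons ?eqxx //; by rewrite IH ?orbT. Qed.

Hypothesis Hcase : finite_exponent A \/ finite_support B.

Lemma evalw_nil u : valid u -> evalw u [::] = [::].
Proof. elim: u => //= l u IH [Hl Hu]; case: l Hl => [a|b] /= Hl; last rewrite (B_nil Hl); exact: IH Hu. Qed.

Lemma sum_pos_exn n (F : nat -> nat) : 0 < \sum_(j < n) F j -> exists2 j, j < n & 0 < F j.
Proof.
elim: n => [|n IH]; first by rewrite big_ord0.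
rewrite big_ord_recr /=; case: (posnP (F n)) => [->|Hp]; last by exists n.
rewrite addn0 => /IH [j Hj Pj]; exists j => //; exact: ltnW.
Qed.

Lemma bcount_secpow_rot1 u n x : 0 < n -> iter n (permw u) x = x ->
  bcount (secpow u n (permw u x)) = bcount (secpow u n x).
Proof.
case: n => // n _ En.
have E1 : secpow u n.+1 (permw u x) = secpow u n (permw u x) ++ secw u x.
  by rewrite -addn1 secpow_add /= -iterSr En cats0.
by rewrite E1 /= /bcount !count_cat addnC.
Qed.

Lemma bcount_secpow_orbit u n x j : 0 < n -> iter n (permw u) x = x ->
  bcount (secpow u n (iter j (permw u) x)) = bcount (secpow u n x).
Proof.
move=> Hn En; elim: j => //= j IH; rewrite bcount_secpow_rot1 // -iterD addnC iterD En //.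
Qed.

Lemma finv_spec (f : X -> X) (y : X) : A f -> f (Defs.finv f y) = y.
Proof.
move=> /A_inv [f' [_ [_ K]]]; rewrite /Defs.finv.
exact: (epsilon_spec (inhabits y) (fun z => f z = y) (ex_intro _ (f' y) (K y))).
Qed.

Lemma finv_f (f : X -> X) (z : X) : A f -> Defs.finv f (f z) = z.
Proof. move=> Hf; apply: (A_inj Hf); exact: finv_spec. Qed.

Lemma evalw_secw_triv u y : (forall i, i < size u -> forall v, act (secl (nth dl u i) (pre u i y)) v = v) ->
  forall v, evalw (secw u y) v = v.
Proof.
elim: u y => //= l u IH y H v.
have H0 := H 0 isT; rewrite /pre /= in H0; rewrite H0.
apply: IH => i Hi; exact: (H i.+1 Hi).
Qed.

Lemma evalw_secpow_triv u n x : (forall j, j < n -> forall i, i < size u ->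
   forall v, act (secl (nth dl u i) (pre u i (iter j (permw u) x))) v = v) ->
  forall v, evalw (secpow u n x) v = v.
Proof.
elim: n x => //= n IH x H v; rewrite evalw_cat evalw_secw_triv; last exact: H 0 isT.
apply: IH => j Hj i Hi v'; rewrite -iterSr; exact: H j.+1 Hj i Hi v'.
Qed.

Section Step.
Variables (u : seq letter) (b0 : seq X -> seq X) (u' : seq letter).
Hypothesis Hu : valid u.
Hypothesis Hform : u = LB b0 :: u'.
Hypothesis IH : forall v, valid v -> bcount v < bcount u -> perw v.
Hypothesis Hard : forall l, isminper (permw u) x0 l -> bcount (secpow u l x0) = bcount u ->
  perw (secpow u l x0).

Let p := permw u.
Let Ap : A p := A_permw Hu.
Let injp : injective p := A_inj Ap.

Lemma step_point_min f l : isminper p f l -> perw (secpow u l f).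
Proof.
move=> Hl; have := bcount_secpow_le Hu Hl; rewrite leq_eqVlt => /orP [/eqP E|Hlt];
  last by apply: IH => //; exact: valid_secpow.
have [j Hj Ej] := bcount_secpow_eq Hu Hl E (i := 0) (ltac:(by rewrite Hform)) (ltac:(by rewrite Hform)).
rewrite /pre take0 /= in Ej.
have Hl0 : isminper p x0 l by rewrite -Ej; exact: minper_orbit.
have Ec : bcount (secpow u l x0) = bcount u.
  by rewrite -Ej bcount_secpow_orbit //; case: Hl => ? [].
have [N [HN HP]] := Hard Hl0 Ec; exists N; split => //.
have -> : f = iter (l - j) p x0.
  by rewrite -Ej -iterD subnK ?(ltnW Hj) //; case: Hl => _ [].
apply: perN_secpow_orbit => //; case: Hl0 => // ? [] //.
Qed.

Lemma step_point m f : 0 < m -> (forall t, iter m p t = t) -> perw (secpow u m f).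
Proof.
move=> Hm Em; have [l Hl] : exists l, isminper p f l by apply: exists_minper; exists m.
have := minper_dvd Hl (Em f) => /dvdnP [q Eq].
have [N [HN HP]] := step_point_min Hl; exists N; split => //; rewrite Eq.
apply: perN_secpow_mul => //; by case: Hl => _ [].
Qed.

Lemma step_list m (F : seq X) : 0 < m -> (forall t, iter m p t = t) ->
  exists N, 0 < N /\ forall f, f \in F -> perN (secpow u m f) N.
Proof.
move=> Hm Em; elim: F => [|f F [N [HN HF]]]; first by exists 1.
have [Nf [HNf Hf]] := step_point f Hm Em.
exists (N * Nf); split; first by rewrite muln_gt0 HN.
move=> g; rewrite in_cons => /orP [/eqP ->|Hg]; first exact: perN_mul.
by rewrite mulnC; apply: perN_mul; apply: HF.
Qed.

Lemma step_unif m E0 (F : seq X) : 0 < m -> (forall t, iter m p t = t) -> 0 < E0 ->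
  (forall x, perN (secpow u m x) E0 \/ exists2 f, f \in F & exists j, x = iter j p f) ->
  perw u.
Proof.
move=> Hm Em HE0 Hx.
have [N [HN HF]] := step_list F Hm Em.
have HU : forall x, perN (secpow u m x) (N * E0).
  move=> x; case: (Hx x) => [H|[f Hf [j ->]]]; first exact: perN_mul.
  rewrite mulnC; apply: perN_mul; apply: perN_secpow_orbit => //; exact: HF.
exists (N * E0 * m); split; first by rewrite !muln_gt0 HN HE0 Hm.
case=> [|x v]; first by apply: iter_fix; exact: evalw_nil.
rewrite iterM.
have Hit : forall k v, iter k (iter m (evalw u)) (x :: v) = x :: iter k (evalw (secpow u m x)) v.
  elim=> //= k IHk v'; rewrite IHk iter_evalw // Em //.
by rewrite Hit HU.
Qed.

Lemma step : perw u.
Proof.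
have [m [Hm Em]] := A_per Ap.
case: Hcase => [[E [HE HEA]]|HS].
  pose F := [seq Defs.finv (pre u i) x0 | i <- iota 0 (size u)].
  apply: (step_unif (E0 := E) (F := F) Hm Em HE) => x.
  case: (posnP (bcount (secpow u m x))) => [H0|Hpos].
    left => t; have [HA HE'] := pureA (valid_secpow m x Hu) H0.
    rewrite (_ : iter E _ t = iter E (rooted (permw (secpow u m x))) t).
      by rewrite iter_rooted; case: t => //= y v; rewrite HEA.
    by elim: E {HE HEA} => //= E ->; rewrite HE'.
  right; move: Hpos; rewrite bcount_secpow => /(@sum_pos_exn m (fun j => bcount (secw u (iter j (permw u) x)))) [j Hj].
  rewrite bcount_secw => /(@sum_pos_ex (size u) (fun i => isB (nth dl u i) && (pre u i (iter j (permw u) x) == x0))) [i Hi /andP [_ /eqP Ei]].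
  exists (Defs.finv (pre u i) x0).
    apply/mapP; exists i => //; by rewrite mem_iota.
  exists (m - j); rewrite -Ei finv_f; last by apply: A_permw; apply: valid_take.
  by rewrite -iterD subnK ?(ltnW Hj) // Em.
have [F HF] : exists F : seq X, forall i, i < size u -> forall y,
    ~ (forall v, act (secl (nth dl u i) (pre u i y)) v = v) -> y \in F.
  suff : forall n, exists F : seq X, forall i, i < n -> forall y,
    ~ (forall v, act (secl (nth dl u i) (pre u i y)) v = v) -> y \in F.
    by move=> /(_ (size u)).
  elim=> [|n [F HF]]; first by exists [::].
  have Hvn : vl (nth dl u n) by apply: valid_nth.
  case En: (nth dl u n) Hvn => [a|b] Hvn.
    exists F => i; rewrite ltnS leq_eqVlt => /orP [/eqP ->|Hi]; last exact: HF.
    by move=> y []; rewrite En => -[|].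
  have [s Hs] := HS b Hvn.
  exists (F ++ [seq Defs.finv (pre u n) z | z <- x0 :: s]) => i.
  rewrite ltnS leq_eqVlt => /orP [/eqP ->|Hi] y Hy; last by rewrite mem_cat (HF i Hi y Hy).
  rewrite mem_cat; apply/orP; right; apply/mapP; exists (pre u n y); last first.
    by rewrite finv_f //; apply: A_permw; apply: valid_take.
  rewrite in_cons; case: eqP => //= Hz.
  case: (excluded_middle_informative (List.In (pre u n y) s)) => [Hin|Hnin]; first exact: In_mem.
  exfalso; apply: Hy; rewrite En /=; move/eqP/negbTE: Hz => ->.
  case=> [|t v] //=; rewrite /secA /perm_of (Hs _ Hnin) //.
apply: (step_unif (E0 := 1) (F := F) Hm Em isT) => x.
case: (excluded_middle_informative (exists j i, j < m /\ i < size u /\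
    ~ (forall v, act (secl (nth dl u i) (pre u i (iter j p x))) v = v))).
  move=> [j [i [Hj [Hi Hn]]]]; right; exists (iter j p x); first exact: HF Hn.
  by exists (m - j); rewrite -iterD subnK ?(ltnW Hj) // Em.
move=> Hno; left => t /=; apply: evalw_secpow_triv => j Hj i Hi v.
apply: NNPP => Hn; apply: Hno; exists j, i; do 2!split => //; move=> H; apply: Hn; exact: H.
Qed.
End Step.

Fixpoint compw (T : Type) (phi : letter -> T -> T) (u : seq letter) : T -> T :=
  match u with [::] => id | l :: u' => fun t => compw phi u' (phi l t) end.

Lemma permw_compw u t : permw u t = compw pl u t.
Proof. by elim: u t => //= l u IH t. Qed.
Lemma evalw_compw u t : evalw u t = compw act u t.
Proof. by elim: u t => //= l u IH t. Qed.

Lemma compw_cat T (phi : letter -> T -> T) u v t : compw phi (u ++ v) t = compw phi v (compw phi u t).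
Proof. by elim: u t => //= l u IH t. Qed.

Lemma compw_prodf T (phi : letter -> T -> T) u t : compw phi u t = prodf (size u) (fun i => phi (nth dl u i)) t.
Proof. by elim: u t => // l u IH t; rewrite [RHS]prodf_recl -IH. Qed.

Lemma pre_prodf u i t : pre u i t = prodf i (fun k => pl (nth dl u k)) t.
Proof.
elim: u i t => [|l u IH] [|i] t //.
  by rewrite [RHS]prodf_id // => k _ t'; rewrite nth_nil.
by rewrite [RHS]prodf_recl -IH.
Qed.

Lemma compw_secw T (phi : letter -> T -> T) u x t :
  compw phi (secw u x) t = prodf (size u) (fun i => phi (secl (nth dl u i) (pre u i x))) t.
Proof. by elim: u x t => // l u IH x t; rewrite [RHS]prodf_recl -IH. Qed.

Lemma compw_secpow T (phi : letter -> T -> T) u n x t :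
  compw phi (secpow u n x) t = prodf n (fun j => compw phi (secw u (iter j (permw u) x))) t.
Proof.
elim: n x t => // n IH x t; rewrite [RHS]prodf_recl /= compw_cat IH.
by apply: eq_prodf => j _ t'; rewrite -iterSr. Qed.

Lemma size_secw u x : size (secw u x) = size u.
Proof. by elim: u x => //= l u IH x; rewrite IH. Qed.

Lemma nth_secw u x i : i < size u -> nth dl (secw u x) i = secl (nth dl u i) (pre u i x).
Proof. by elim: u x i => //= l u IH x [|i] //= Hi; rewrite IH. Qed.

Lemma allpl_secw (P : (X -> X) -> Prop) u x : P id ->
  (forall i, i < size u -> P (pl (secl (nth dl u i) (pre u i x)))) ->
  forall i, P (pl (nth dl (secw u x) i)).
Proof.
move=> Pid H i; case: (ltnP i (size u)) => Hi; first by rewrite nth_secw //; exact: H.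
by rewrite nth_default // size_secw.
Qed.

Lemma allpl_secpow (P : (X -> X) -> Prop) u n x : P id ->
  (forall j, j < n -> forall i, P (pl (nth dl (secw u (iter j (permw u) x)) i))) ->
  forall i, P (pl (nth dl (secpow u n x) i)).
Proof.
move=> Pid; elim: n x => [|n IH] x H i /=; first by rewrite nth_nil.
rewrite nth_cat; case: ifP => _; first exact: (H 0).
apply: IH => j Hj i'; rewrite -iterSr; exact: H j.+1 Hj i'.
Qed.

Lemma iter_conjA (c a : X -> X) k (z : X) : A c ->
  iter k (conjA c a) z = Defs.finv c (iter k a (c z)).
Proof.
move=> Ac; elim: k => [|k IH] /=; first by rewrite finv_f.
by rewrite IH /conjA finv_spec.
Qed.

Lemma A_iter f n : A f -> A (iter n f).
Proof.
move=> Af; elim: n => [|n IH]; first by rewrite (_ : iter 0 f = id) //; apply: functional_extensionality.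
rewrite (_ : iter n.+1 f = f \o iter n f); first exact: A_comp.
by apply: functional_extensionality => t; rewrite iterS.
Qed.

Definition Gs (s : X -> X) := gen (fun f => exists b y, B b /\ Xset x0 A s x0 y /\ f = secA b y).

Lemma Gs_gen s b y : B b -> Xset x0 A s x0 y -> Gs s (secA b y).
Proof.
move=> Hb Hy; have := @gen_mul _ (fun f => exists b y, B b /\ Xset x0 A s x0 y /\ f = secA b y) id (secA b y) (gen_id _).
by apply; exists b, y.
Qed.

Section G1.
Variables (u : seq letter) (l : nat).
Hypothesis Hu : valid u.
Let sg := permw u.
Hypothesis Hl : isminper sg x0 l.
Hypothesis Hland : forall i, i < size u -> isB (nth dl u i) ->
  exists2 j, j < l & pre u i (iter j sg x0) = x0.

Lemma G1_letter i j : i < size u -> Gs sg (pl (secl (nth dl u i) (pre u i (iter j sg x0)))).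
Proof.
move=> Hi; case En: (nth dl u i) => [a|b] /=; first exact: gen_id.
case: eqP => [_|Hz]; first exact: gen_id.
have Hb : B b by have := valid_nth i Hu; rewrite En.
apply: Gs_gen => //.
have [ji Hji Eji] := Hland Hi (ltac:(by rewrite En)).
have Ag : A (pre u i \o iter ji sg).
  by apply: A_comp; [apply: A_iter; exact: A_permw|apply: A_permw; exact: valid_take].
have [c [Ac [K1 K2]]] := A_inv Ag.
have Ecx : c x0 = x0 by rewrite -{1}Eji; exact: K1.
exists (conjA c sg); split; first by exists c.
split => //; exists ((l - ji) + j).
rewrite iter_conjA // Ecx.
have -> : forall y, Defs.finv c y = (pre u i \o iter ji sg) y.
  by move=> y; rewrite -{1}(K1 y) finv_f.
rewrite /= -iterD addnA subnKC ?(ltnW Hji) // addnC iterD.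
by case: Hl => _ [-> _].
Qed.
End G1.

Hypothesis B_ab : abelian_set B.
Hypothesis orb_ab : strongly_orbitwise_abelian x0 A B.

Definition bl (l : letter) : seq X -> seq X := match l with LA _ => id | LB b => b end.
Definition hl (l : letter) (z : X) : X -> X := pl (secl l z).

Lemma B_bl_secl l z : vl l -> B (bl (secl l z)).
Proof. case: l => [a|b] //= H; case: eqP => //. Qed.

Lemma B_bl l : vl l -> B (bl l).
Proof. by case: l. Qed.

Lemma B_prodf n (F : nat -> seq X -> seq X) : (forall i, B (F i)) -> B (prodf n F).
Proof. move=> H; elim: n => //= n IH; exact: (B_comp IH (H n)). Qed.

Lemma secA_id (y z : X) : secA id y z = z. Proof. by []. Qed.

Lemma secA_ext (f g : seq X -> seq X) (y z : X) : (forall t, f t = g t) -> secA f y z = secA g y z.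
Proof. by move=> H; rewrite /secA /perm_of /sec H. Qed.

Lemma secA_comp (f g : seq X -> seq X) (y z : X) : B f -> B g -> y <> x0 ->
  secA (fun t => g (f t)) y z = secA g y (secA f y z).
Proof.
move=> Bf Bg Hy; rewrite /secA /perm_of /sec /=.
rewrite B_cons // -/(sec f [:: y] [:: z]) B_secx // /=.
by rewrite B_cons // -/(sec g [:: y] _) B_secx.
Qed.

Lemma secA_prodf n (F : nat -> seq X -> seq X) (y z : X) : (forall i, B (F i)) -> y <> x0 ->
  secA (prodf n F) y z = prodf n (fun i => secA (F i) y) z.
Proof.
move=> HB Hy; elim: n z => // n IH z /=.
rewrite (@secA_comp (prodf n F) (F n)) //; [by rewrite IH|exact: B_prodf].
Qed.

Lemma comm_iter (f g : X -> X) j : comm f g -> comm f (iter j g).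
Proof. by move=> H; elim: j => //= j IH t; rewrite H IH. Qed.

Lemma Gs_orbit (sg : X -> X) (b : seq X -> seq X) j : A sg -> B b ->
  Gs sg (hl (LB b) (iter j sg x0)).
Proof.
move=> Asg Hb; rewrite /hl /=; case: eqP => [_|Hz]; first exact: gen_id.
apply: Gs_gen => //; exists (conjA id sg); split; first by exists id.
split => //; exists j; rewrite iter_conjA //=.
by rewrite (_ : Defs.finv id _ = iter j sg x0) // -{2}[iter j sg x0]/(id (iter j sg x0)) finv_f.
Qed.

Lemma ell_eq (sg : X -> X) l : isminper sg x0 l -> ell x0 sg = l.
Proof.
move=> Hl; rewrite /ell.
have H := epsilon_spec (inhabits 0%N) (fun n => 0 < n /\ iter n sg x0 = x0 /\
     forall m, 0 < m -> iter m sg x0 = x0 -> n <= m) (ex_intro _ l Hl).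
case: H => [H1 [H2 H3]]; case: Hl => [L1 [L2 L3]].
by apply/eqP; rewrite eqn_leq H3 // L3.
Qed.

Lemma eq_in_foldl' (S : Type) (f g : S -> nat -> S) t s :
  (forall k, k \in s -> forall z, f z k = g z k) -> foldl f t s = foldl g t s.
Proof.
elim: s t => //= k s IH t H; rewrite H ?mem_head // IH // => k' Hk'; apply: H.
by rewrite in_cons Hk' orbT.
Qed.

Section G23.
Variables (u : seq letter) (l : nat).
Hypothesis Hu : valid u.
Let sg := permw u.
Let Asg : A sg := A_permw Hu.
Hypothesis Hl : isminper sg x0 l.
Hypothesis Hland : forall i, i < size u -> isB (nth dl u i) ->
  exists2 j, j < l & pre u i (iter j sg x0) = x0.

Lemma G2 t : compw bl (secpow u l x0) t = compw bl u t.
Proof.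
rewrite compw_secpow.
rewrite (eq_prodf (G := fun j => prodf (size u) (fun i => bl (secl (nth dl u i) (pre u i (iter j sg x0)))))); last first.
  by move=> j _ t'; rewrite compw_secw.
rewrite prodf_exch; last first.
  move=> i j i' j' t'; apply: B_ab; apply: B_bl_secl; exact: valid_nth.
rewrite compw_prodf; apply: eq_prodf => i Hi t'.
case En: (nth dl u i) => [a|b] /=; first by rewrite prodf_id.
rewrite (eq_prodf (G := fun j => if pre u i (iter j sg x0) == x0 then b else id)); last first.
  by move=> j _ t''; case: eqP.
apply: prodf_single.
  move=> j j' Hj Hj' /eqP E /eqP E'; exact: (landing_unique Hu Hl Hj Hj' E E').
have [j Hj Ej] := Hland Hi (ltac:(by rewrite En)); exists j => //; exact/eqP.
Qed.

Hypothesis Hgood : forall i j, comm (pl (nth dl u i)) (pl (nth dl u j)).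

Lemma G3 t : permw (secpow u l x0) t = lam x0 (compw bl u) sg t.
Proof.
have Gab : forall f g, Gs sg f -> Gs sg g -> comm f g.
  move=> f g Hf Hg s; exact: (@orb_ab sg x0 Asg f g Hf Hg s).
have Gall : forall i j, Gs sg (hl (nth dl u i) (pre u i (iter j sg x0))).
  move=> i j; case: (ltnP i (size u)) => Hi; first exact: (G1_letter Hu Hl Hland j Hi).
  by rewrite nth_default //; exact: gen_id.
have Gorb : forall i j, Gs sg (hl (nth dl u i) (iter j sg x0)).
  move=> i j; have := valid_nth i Hu; case: (nth dl u i) => [a|b] /= Hv.
    exact: gen_id.
  exact: Gs_orbit.
rewrite permw_compw compw_secpow.
rewrite (eq_prodf (G := fun j => prodf (size u) (fun i => hl (nth dl u i) (pre u i (iter j sg x0))))); last first.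
  by move=> j _ t'; rewrite compw_secw.
rewrite prodf_exch; last by move=> i j i' j'; apply: Gab.
rewrite (eq_prodf (G := fun i => prodf l (fun j => hl (nth dl u i) (iter j sg x0)))); last first.
  move=> i Hi t'.
  case En: (nth dl u i) => [a|b]; first by rewrite !prodf_id.
  have [ji Hji Eji] := Hland Hi (ltac:(by rewrite En)).
  have Hc : comm (pre u i) sg.
    move=> s; rewrite !pre_prodf /sg !permw_compw !compw_prodf.
    apply: prodf_comm => k _; apply: comm_sym; apply: prodf_comm => k' _; exact: Hgood.
  have Ep : pre u i x0 = iter (l - ji) sg x0.
    rewrite -{2}Eji (comm_iter ji Hc) -iterD subnK ?(ltnW Hji) //.
    by rewrite -(comm_iter l Hc); case: Hl => _ [-> _].
  rewrite (eq_prodf (G := fun j => hl (LB b) (iter (j + (l - ji)) sg x0))); last first.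
    by move=> j _ t''; rewrite /hl (comm_iter j Hc) Ep -iterD.
  apply: (@prodf_rot _ l (l - ji) (fun j => hl (LB b) (iter j sg x0))).
    move=> a' b'; apply: Gab; apply: Gs_orbit => //; by have := valid_nth i Hu; rewrite En.
  by move=> j t''; rewrite iterD; case: Hl => _ [-> _].
rewrite (@prodf_exch _ (size u) l (fun a b => hl (nth dl u b) (iter a sg x0))); last by move=> *; apply: Gab.
rewrite (eq_prodf (G := fun j => if iter j sg x0 == x0 then id else secA (compw bl u) (iter j sg x0))); last first.
  move=> j _ t'; case: eqP => [E|NE].
    apply: prodf_id => i _ s; rewrite /hl E; case: (nth dl u i) => [a|b] //=; by rewrite eqxx.
  rewrite (@secA_ext (compw bl u) _ (iter j sg x0) t' (compw_prodf bl u)) secA_prodf //; last first.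
    by move=> i; apply: B_bl; apply: valid_nth.
  apply: eq_prodf => i _ s; rewrite /hl; case: (nth dl u i) => [a|b] //=; by case: eqP.
rewrite prodf_foldl /lam (ell_eq Hl).
case: Hl => [L1 [L2 L3]]; case: l L1 L2 L3 => // l' _ L2 L3 /=.
rewrite eqxx /=; apply: eq_in_foldl' => k; rewrite mem_iota => /andP [Hk1 Hk2] z.
case: eqP => // E; have := L3 k Hk1 E; by rewrite leqNgt; move: Hk2; rewrite add1n => ->.
Qed.
End G23.

Hypothesis B_per : periodic B.
Variable e : X -> X -> X.
Hypothesis He : e_choice x0 A e.
Hypothesis Hev : forall b, B b -> eventually_trivial A (Lam x0 e b).

Definition GoodA u := forall i j, comm (pl (nth dl u i)) (pl (nth dl u j)).

Lemma Lam_mono b n (P Q : (X -> X) -> Prop) : (forall f, P f -> Q f) ->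
  forall f, iter n (Lam x0 e b) P f -> iter n (Lam x0 e b) Q f.
Proof.
elim: n => //= n IH H f [a [x [Ha ->]]]; exists a, x; split => //; exact: IH.
Qed.

Lemma perw_B (f : seq X -> seq X) u : B f -> (forall t, evalw u t = f t) -> perw u.
Proof.
move=> Bf E; have [N [HN HP]] := B_per Bf; exists N; split => // t.
by rewrite (eq_iter E).
Qed.

Section Next.
Variables (u : seq letter) (b0 : seq X -> seq X) (u1 : seq letter) (l : nat).
Hypothesis Hu : valid u.
Hypothesis Hform : u = LB b0 :: u1.
Hypothesis Hl : isminper (permw u) x0 l.
Hypothesis Hc : bcount (secpow u l x0) = bcount u.

Let Hland := bcount_secpow_eq Hu Hl Hc.

Lemma next_form : exists u2, secpow u l x0 = LB b0 :: u2.
Proof.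
case: Hl => [L1 _]; case: l L1 => // l' _ /=; rewrite Hform /= eqxx.
by eexists.
Qed.

Lemma next_good : GoodA (secpow u l x0).
Proof.
have Asg := A_permw Hu.
have H : forall i, Gs (permw u) (pl (nth dl (secpow u l x0) i)).
  apply: allpl_secpow; first exact: gen_id.
  move=> j Hj; apply: allpl_secw; first exact: gen_id.
  move=> i Hi; exact: (G1_letter Hu Hl Hland j Hi).
move=> i j t; exact: (@orb_ab (permw u) x0 Asg _ _ (H i) (H j) t).
Qed.
End Next.

Lemma conjA_e (s : X -> X) : conjA (e x0) s = s.
Proof.
case: He => [HeA He0]; apply: functional_extensionality => z.
rewrite /conjA He0 -{1}(He0 (s z)) finv_f //; exact: (proj1 (HeA x0)).
Qed.

Section Main.
Variable k : nat.
Hypothesis IHk : forall v, valid v -> bcount v < k -> perw v.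

Lemma lam_phase n : forall u b0 u1 (beta : seq X -> seq X), valid u -> u = LB b0 :: u1 -> GoodA u ->
  bcount u = k -> (forall t, compw bl u t = beta t) ->
  (forall f, iter n (Lam x0 e beta) (fun f' => f' = permw u) f -> forall z, f z = z) -> perw u.
Proof.
elim: n => [|n IHn] u b0 u1 beta Hu Hform Hg Hk Hbeta Htr.
  apply: (step Hu Hform) => [v Hv|l Hl Hc]; first by rewrite Hk; exact: IHk.
  have Hland := bcount_secpow_eq Hu Hl Hc.
  have Hid := Htr (permw u) erefl.
  have El : l = 1.
    case: Hl => [L1 [_ L3]]; apply/eqP; rewrite eqn_leq L1 andbT; apply: L3 => //=; exact: Hid.
  subst l.
  apply: (@perw_B (prodf (size u) (fun i => bl (nth dl u i)))).
    by apply: B_prodf => i; apply: B_bl; apply: valid_nth.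
  move=> t; rewrite /= evalw_cat /= evalw_compw compw_secw; apply: eq_prodf => i Hi t'.
  case En: (nth dl u i) => [a|b] /=; first by case: t'.
  have [j Hj Ej] := Hland i Hi (ltac:(by rewrite En)).
  move: Hj Ej; rewrite ltnS leqn0 => /eqP -> /= ->; by rewrite eqxx.
apply: (step Hu Hform) => [v Hv|l Hl Hc]; first by rewrite Hk; exact: IHk.
have Hland := bcount_secpow_eq Hu Hl Hc.
have [u2 Hf2] := next_form Hform Hl.
apply: (IHn _ b0 u2 beta).
- exact: valid_secpow.
- exact: Hf2.
- exact: next_good.
- by rewrite Hc.
- by move=> t; rewrite G2.
move=> f Hf; apply: Htr; rewrite iterSr; apply: Lam_mono Hf => g ->.
exists (permw u), x0; split => //.
rewrite /lamx conjA_e; apply: functional_extensionality => z; rewrite (G3 Hu Hl Hland Hg).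
suff -> : compw bl u = beta by [].
exact: functional_extensionality.
Qed.

Lemma split_B u : 0 < bcount u -> exists u1 b u2, u = u1 ++ LB b :: u2.
Proof.
elim: u => // l u IH; case: l => [a|b] /=.
  by move=> /IH [u1 [b [u2 ->]]]; exists (LA a :: u1), b, u2.
by move=> _; exists [::], b, u.
Qed.

Lemma main_k u : valid u -> bcount u = k -> perw u.
Proof.
move=> Hu Hk; case: (posnP k) => [Hk0|Hkpos].
  have [HA HE] := pureA Hu (etrans Hk Hk0).
  have [N [HN HP]] := A_per HA; exists N; split => // t.
  rewrite (eq_iter HE) iter_rooted; case: t => //= x v; by rewrite HP.
have [u1 [b [u2 Eu]]] := split_B (ltac:(by rewrite Hk) : 0 < bcount u).
move: Hu Hk; rewrite Eu => Hu Hk.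
have Hv : valid (LB b :: u2) /\ valid u1 by move/valid_cat: Hu => [? ?].
apply: perw_rot; first exact: (proj1 Hv).
set u0 := (LB b :: u2) ++ u1.
have Hu0 : valid u0 by apply/valid_cat; tauto.
have Hk0 : bcount u0 = k by rewrite -Hk /u0 /bcount !count_cat /= addnC.
apply: (@step u0 b (u2 ++ u1) Hu0 erefl) => [v Hv'|l Hl Hc]; first by rewrite Hk0; exact: IHk.
have Hland := bcount_secpow_eq Hu0 Hl Hc.
have [u2' Hf] := @next_form u0 b (u2 ++ u1) l erefl Hl.
pose beta := prodf (size u0) (fun i => bl (nth dl u0 i)).
have Bbeta : B beta by apply: B_prodf => i; apply: B_bl; apply: valid_nth.
have [N HN] := Hev Bbeta (A_permw (valid_secpow l x0 Hu0)).
apply: (@lam_phase N.+1 _ b u2' beta).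
- exact: valid_secpow.
- exact: Hf.
- exact: next_good.
- by rewrite Hc.
- by move=> t; rewrite G2 // compw_prodf.
exact: HN.
Qed.
End Main.

Lemma all_perw n : forall u, valid u -> bcount u < n -> perw u.
Proof.
elim: n => // n IH u Hu Hn; apply: (@main_k (bcount u)) => // v Hv Hlt.
apply: IH => //; exact: leq_trans Hlt _.
Qed.

Lemma CS_words g : CS_group A B g -> exists u, valid u /\ forall t, g t = evalw u t.
Proof.
elim=> [|g0 s Hg [u [Hu E]] Hs|g0 s s' Hg [u [Hu E]] Hs K1 K2].
- by exists [::].
- case: Hs => [[a [Ha ->]]|Hb].
    exists (u ++ [:: LA a]); split; first by apply/valid_cat.
    by move=> t; rewrite evalw_cat /= E.
  exists (u ++ [:: LB s]); split; first by apply/valid_cat.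
  by move=> t; rewrite evalw_cat /= E.
- case: Hs => [[a [Ha Es]]|Hb].
    have [a' [Ha' [L1 L2]]] := A_inv Ha.
    exists (u ++ [:: LA a']); split; first by apply/valid_cat.
    move=> t; rewrite evalw_cat /= -E.
    have Hs : s (rooted a' (g0 t)) = g0 t by rewrite Es; case: (g0 t) => //= x v; rewrite L2.
    by rewrite /= -{1}Hs K1.
  have [b' [Hb' [L1 L2]]] := B_inv Hb.
  exists (u ++ [:: LB b']); split; first by apply/valid_cat.
  move=> t; rewrite evalw_cat /= -E.
  by rewrite /= -{1}(L2 (g0 t)) K1.
Qed.

Lemma gen_periodic : periodic (CS_group A B).
Proof.
move=> g /CS_words [u [Hu E]]; have [N [HN HP]] := all_perw Hu (ltnSn _).
by exists N; split => // t; rewrite (eq_iter E).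
Qed.
End Words.


Definition cX (X : Type) : Type := X.
Definition ceq (X : Type) (x y : cX X) : bool :=
  if excluded_middle_informative (x = y) then true else false.
Lemma ceqP (X : Type) : Equality.axiom (@ceq X).
Proof. move=> x y; rewrite /ceq; case: excluded_middle_informative => H; by constructor. Qed.
HB.instance Definition _ (X : Type) := hasDecEq.Build (cX X) (@ceqP X).

Theorem theoremA (X : Type) (x0 : X) (A : (X -> X) -> Prop)
  (B : (seq X -> seq X) -> Prop) (e : X -> X -> X) :
  CS_data x0 A B ->
  stable x0 A B ->
  strongly_orbitwise_abelian x0 A B ->
  periodic A ->
  (finite_exponent A \/ finite_support B) ->
  abelian_set B ->
  periodic B ->
  e_choice x0 A e ->
  (forall b, B b -> eventually_trivial A (Lam x0 e b)) ->
  periodic (CS_group A B).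
Proof.
move=> [[A1 [A2 A3]] [_ [_ [[B1 [B2 B3]] [Btree [Bsec0 [Bsecx _]]]]]]] _ Hoa HAp Hcase HBab HBp He Hev.
have Bcons : forall (b : seq X -> seq X) (x : X) (v : seq X), B b -> b (x :: v) = x :: sec b [:: x] v.
  move=> b x v Hb; have [[_ [_ Hpre]] Hst] := Btree b Hb.
  have := Hpre [:: x] v; rewrite /= Hst => Et.
  by rewrite -[b (x :: v)](cat_take_drop 1) Et.
have Bnil : forall b : seq X -> seq X, B b -> b [::] = [::].
  by move=> b Hb; have [[_ [Hsz _]] _] := Btree b Hb; apply/size0nil; rewrite Hsz.
exact: (@gen_periodic (cX X) x0 A B A1 A2 A3 B1 B2 B3 Bcons Bnil
  (fun b v Hb => Bsec0 b Hb v) (fun b x Hb Hx => proj1 (Bsecx b x Hb Hx))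
  (fun b x v Hb Hx => proj2 (Bsecx b x Hb Hx) v) HAp Hcase HBab Hoa HBp e He Hev).
Qed.
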